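(* Let $T(z)=z/(1-z)$ and, for a plane binary tree $t$, let $S_t(z)$ and its dominant singularity $\tilde\rho=\tilde\rho(t)$ be as in the context. Then for every $\eta>0$ there is $D>0$ independent of $n$ such that \[ \frac{[z^n]S_t(z)}{[z^n]T(z)} = \tilde\rho^{-n-1}\left(1+\mathcal{O}\!\left(\frac{\ln n}{n^{1-\eta}}\right)\right)\quad\text{as } n\to\infty, \] uniformly for all plane binary trees $t$ with $D\le |t|\le n$.
   Context: A plane binary tree is a rooted tree in which each node has a left and a right slot, each empty or holding a subtree; $|t|$ is its number of nodes. A plane increasing binary tree of size $n$ is such a tree whose $n$ nodes are labeled $1,\dots,n$ increasingly along every path from the root; their exponential generating function is $T(z)=z/(1-z)$. A fringe subtree is a node with all its descendants; its shape is obtained by forgetting labels. For $t$ with $k$ nodes, $w(t)=\ell(t)/k!$ where $\ell(t)$ is the number of increasing labelings of $t$. $S_t$ is the exponential generating function of plane increasing binary trees with no fringe subtree of shape $t$, the power series solution of $S_t'=(1+S_t)^2-w(t)kz^{k-1}$, $S_t(0)=0$; one has $S_t=-u'/u$ with $u$ the entire solution of $u''-2u'+(1-w(t)kz^{k-1})u=0$, $u(0)=-1$, $u'(0)=0$, and $\tilde\rho>1$ is the smallest positive zero of $u$. *)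

(* Defs.v *)
From Stdlib Require Import Reals Lra Lia.
From Coquelicot Require Import Coquelicot.
Open Scope R_scope.

(* Plane binary trees: each node has a left and a right slot, each either
   empty or holding a subtree.  [Empty] is the empty slot. *)
Inductive ptree : Type :=
| Empty : ptree
| Node : ptree -> ptree -> ptree.

Fixpoint psize (t : ptree) : nat :=
  match t with
  | Empty => 0%nat
  | Node l r => S (psize l + psize r)
  end.

(* l(t) = number of increasing labelings of t: the root gets the smallest
   label, the remaining |l|+|r| labels are split between the two subtrees
   (binomial choice) and labelled increasingly there. *)
Fixpoint nlab (t : ptree) : R :=
  match t with
  | Empty => 1
  | Node l r => Binomial.C (psize l + psize r) (psize l) * nlab l * nlab r
  end.

Definition wt (t : ptree) : R := nlab t / INR (Factorial.fact (psize t)).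

Definition T_coef (n : nat) : R := match n with O => 0 | S _ => 1 end.

(* s is the coefficient sequence of the power series solution S_t of
   S' = (1+S)^2 - w(t) k z^(k-1), S(0)=0  (k = |t|), written coefficientwise:
   [z^n] S' = (n+1) s_(n+1),  [z^n](1+S)^2 = [n=0] + 2 s_n + sum_{i<=n} s_i s_(n-i). *)
Definition is_S_coeffs (t : ptree) (s : nat -> R) : Prop :=
  s O = 0 /\
  forall n : nat,
    INR (S n) * s (S n) =
      (if Nat.eqb n 0 then 1 else 0) + 2 * s n
      + sum_f_R0 (fun i => s i * s (n - i)%nat) n
      - (if Nat.eqb n (psize t - 1) then wt t * INR (psize t) else 0).

(* u is (the restriction to the real line of) the solution of
   u'' - 2u' + (1 - w(t) k z^(k-1)) u = 0, u(0) = -1, u'(0) = 0. *)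
Definition is_u (t : ptree) (u : R -> R) : Prop :=
  exists u' : R -> R,
    (forall x, is_derive u x (u' x)) /\
    (forall x, is_derive u' x
        (2 * u' x - (1 - wt t * INR (psize t) * x ^ (psize t - 1)) * u x)) /\
    u 0 = -1 /\ u' 0 = 0.

Definition smallest_pos_zero (u : R -> R) (rho : R) : Prop :=
  0 < rho /\ u rho = 0 /\ (forall x, 0 < x < rho -> u x <> 0).

(* Main.v *)
Require Import Defs.
From Stdlib Require Import Reals Lra Lia.
From Coquelicot Require Import Coquelicot.
Open Scope R_scope.

Fixpoint sm (f : nat -> R) (n : nat) : R :=
  match n with O => 0 | S m => sm f m + f m end.

Lemma sm_ext f g n : (forall i, (i < n)%nat -> f i = g i) -> sm f n = sm g n.
Proof. induction n; simpl; intros H; auto. rewrite IHn by (intros; apply H; lia). rewrite H by lia. auto. Qed.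

Lemma sm_plus f g n : sm (fun i => f i + g i) n = sm f n + sm g n.
Proof. induction n; simpl; [lra|rewrite IHn; lra]. Qed.

Lemma sm_minus f g n : sm (fun i => f i - g i) n = sm f n - sm g n.
Proof. induction n; simpl; [lra|rewrite IHn; lra]. Qed.

Lemma sm_scal a f n : sm (fun i => a * f i) n = a * sm f n.
Proof. induction n; simpl; [lra|rewrite IHn; lra]. Qed.

Lemma sm_scalr a f n : sm (fun i => f i * a) n = sm f n * a.
Proof. induction n; simpl; [lra|rewrite IHn; lra]. Qed.

Lemma sm_zero f n : (forall i, (i < n)%nat -> f i = 0) -> sm f n = 0.
Proof. intros H. rewrite (sm_ext f (fun _ => 0)) by auto. clear H. induction n; simpl; auto; lra. Qed.

Lemma sm_split f a b : sm f (a + b) = sm f a + sm (fun i => f (a + i)%nat) b.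
Proof. induction b; simpl. rewrite Nat.add_0_r; lra. rewrite Nat.add_succ_r. simpl. rewrite IHb. lra. Qed.

Lemma sm_shift1 f n : sm f (S n) = f O + sm (fun i => f (S i)) n.
Proof. induction n; simpl in *. lra. rewrite IHn. lra. Qed.

Lemma sm_le f g n : (forall i, (i < n)%nat -> f i <= g i) -> sm f n <= sm g n.
Proof. induction n; simpl; intros H. lra. assert (f n <= g n) by (apply H; lia).
  assert (sm f n <= sm g n) by (apply IHn; intros; apply H; lia). lra. Qed.

Lemma sm_nonneg f n : (forall i, (i < n)%nat -> 0 <= f i) -> 0 <= sm f n.
Proof. intros H. rewrite <- (sm_zero (fun _ => 0) n) by auto. apply sm_le. auto. Qed.

Lemma sm_abs f n : Rabs (sm f n) <= sm (fun i => Rabs (f i)) n.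
Proof. induction n; simpl. rewrite Rabs_R0; lra. eapply Rle_trans. apply Rabs_triang. lra. Qed.

Lemma sm_mono f a b : (forall i, 0 <= f i) -> (a <= b)%nat -> sm f a <= sm f b.
Proof. intros H Hab. replace b with (a + (b - a))%nat by lia. rewrite sm_split.
  assert (0 <= sm (fun i => f (a + i)%nat) (b - a)) by (apply sm_nonneg; auto). lra. Qed.

Lemma sm_rev f n : sm (fun i => f (n - 1 - i)%nat) n = sm f n.
Proof. induction n. reflexivity.
  rewrite sm_shift1. simpl sm at 2. rewrite <- IHn.
  replace (S n - 1 - 0)%nat with n by lia.
  rewrite (sm_ext (fun i => f (S n - 1 - S i)%nat) (fun i => f (n - 1 - i)%nat)).
  lra. intros; f_equal; lia. Qed.

Lemma sm_delta (m : nat) x n : sm (fun i => if Nat.eqb i m then x else 0) n = if Nat.ltb m n then x else 0.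
Proof. induction n; simpl. destruct m; reflexivity. rewrite IHn.
  destruct (Nat.eqb_spec n m); destruct (Nat.ltb_spec m n); destruct (Nat.ltb_spec m (S n)); try lia; lra. Qed.

Lemma sum_f_R0_sm f n : sum_f_R0 f n = sm f (S n).
Proof. induction n; simpl. lra. simpl in IHn. rewrite IHn. lra. Qed.

Lemma sm_tri (f : nat -> nat -> R) n :
  sm (fun i => sm (fun j => f i j) (S i)) (S n) =
  sm (fun j => sm (fun l => f (j + l)%nat j) (S n - j)) (S n).
Proof.
  induction n.
  - simpl. lra.
  - change (sm (fun i => sm (fun j => f i j) (S i)) (S (S n))) with
      (sm (fun i => sm (fun j => f i j) (S i)) (S n) + sm (fun j => f (S n) j) (S (S n))).
    rewrite IHn.
    change (sm (fun j => sm (fun l => f (j + l)%nat j) (S (S n) - j)) (S (S n))) with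
      (sm (fun j => sm (fun l => f (j + l)%nat j) (S (S n) - j)) (S n) +
       sm (fun l => f (S n + l)%nat (S n)) (S (S n) - S n)).
    replace (S (S n) - S n)%nat with 1%nat by lia. simpl (sm _ 1).
    rewrite (sm_ext (fun j => sm (fun l => f (j + l)%nat j) (S (S n) - j))
                    (fun j => sm (fun l => f (j + l)%nat j) (S n - j) + f (S n) j)).
    2:{ intros i Hi. replace (S (S n) - i)%nat with (S (S n - i)) by lia. cbn [sm].
        replace (i + (S n - i))%nat with (S n) by lia. reflexivity. }
    rewrite sm_plus. change (sm (fun j => f (S n) j) (S (S n))) with
       (sm (fun j => f (S n) j) (S n) + f (S n) (S n)).
    rewrite Nat.add_0_r.
    assert (sm (f (S n)) (S n) = sm (fun j => f (S n) j) (S n)) as -> by reflexivity. lra.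
Qed.

Definition conv (a b : nat -> R) (n : nat) : R := sm (fun i => a i * b (n - i)%nat) (S n).

Lemma conv_ext a a' b b' n : (forall i, a i = a' i) -> (forall i, b i = b' i) -> conv a b n = conv a' b' n.
Proof. intros. unfold conv. apply sm_ext. intros. rewrite H, H0. auto. Qed.

Lemma conv_assoc a b c n : conv (conv a b) c n = conv a (conv b c) n.
Proof.
  unfold conv.
  rewrite (sm_ext _ (fun i => sm (fun j => a j * b (i - j)%nat * c (n - i)%nat) (S i))).
  2:{ intros. rewrite <- sm_scalr. reflexivity. }
  rewrite (sm_tri (fun i j => a j * b (i - j)%nat * c (n - i)%nat)).
  apply sm_ext. intros j Hj. rewrite <- sm_scal.
  replace (S n - j)%nat with (S (n - j)) by lia.
  apply sm_ext. intros l Hl. replace (j + l - j)%nat with l by lia.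
  replace (n - (j + l))%nat with (n - j - l)%nat by lia. lra.
Qed.

Lemma conv_minus_l a b c n : conv (fun i => a i - b i) c n = conv a c n - conv b c n.
Proof. unfold conv. rewrite <- sm_minus. apply sm_ext. intros. lra. Qed.
Lemma conv_plus_l a b c n : conv (fun i => a i + b i) c n = conv a c n + conv b c n.
Proof. unfold conv. rewrite <- sm_plus. apply sm_ext. intros. lra. Qed.
Lemma conv_plus_r a b c n : conv a (fun i => b i + c i) n = conv a b n + conv a c n.
Proof. unfold conv. rewrite <- sm_plus. apply sm_ext. intros. lra. Qed.

Definition Dr (a : nat -> R) (n : nat) : R := INR (S n) * a (S n).

Lemma conv_D a b n : Dr (conv a b) n = conv (Dr a) b n + conv a (Dr b) n.
Proof.
  unfold Dr, conv.
  assert (E1 : sm (fun i => INR (S n) * a (S n) * 0 + INR (S n) * a (S n) * 0) 0 = 0) by (simpl; lra).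
  assert (A : sm (fun i => INR (S i) * a (S i) * b (n - i)%nat) (S n) =
              sm (fun i => INR i * a i * b (S n - i)%nat) (S (S n))).
  { rewrite (sm_shift1 (fun i => INR i * a i * b (S n - i)%nat)). simpl INR at 1. 
    rewrite Rmult_0_l, Rmult_0_l, Rplus_0_l. apply sm_ext. intros. f_equal. }
  assert (B : sm (fun i => a i * (INR (S (n - i)) * b (S (n - i)))) (S n) =
              sm (fun i => INR (S n - i) * a i * b (S n - i)%nat) (S (S n))).
  { change (sm (fun i => INR (S n - i) * a i * b (S n - i)%nat) (S (S n))) with
      (sm (fun i => INR (S n - i) * a i * b (S n - i)%nat) (S n) + INR (S n - S n) * a (S n) * b (S n - S n)%nat).
    replace (INR (S n - S n)) with 0 by (rewrite Nat.sub_diag; reflexivity). rewrite Rmult_0_l, Rmult_0_l, Rplus_0_r.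
    apply sm_ext. intros. replace (S n - i)%nat with (S (n - i)) by lia. lra. }
  rewrite A, B, <- sm_plus, <- sm_scal. apply sm_ext. intros i Hi.
  rewrite minus_INR by lia. ring.
Qed.

Lemma conv_last a b n : conv a b n = a n * b O + sm (fun i => a i * b (n - i)%nat) n.
Proof. unfold conv. simpl. rewrite Nat.sub_diag. lra. Qed.

Lemma conv_zero_r a b n : (forall i, (i <= n)%nat -> b i = 0) -> conv a b n = 0.
Proof. intros. unfold conv. apply sm_zero. intros. rewrite H by lia. lra. Qed.

Lemma conv_delta_l c k1 v n :
  conv (fun i => if Nat.eqb i k1 then c else 0) v n = if Nat.leb k1 n then c * v (n - k1)%nat else 0.
Proof.
  unfold conv. rewrite (sm_ext _ (fun i => if Nat.eqb i k1 then c * v (n - k1)%nat else 0)).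
  - rewrite sm_delta. destruct (Nat.ltb_spec k1 (S n)); destruct (Nat.leb_spec k1 n); try lia; auto.
  - intros i Hi. destruct (Nat.eqb_spec i k1). subst; auto. lra.
Qed.

Lemma FV (c : R) (k1 : nat) (F v : nat -> R) :
  (forall n, Dr F n = conv F F n - (if Nat.eqb n k1 then c else 0)) ->
  F O = 1 -> v O = -1 -> v 1%nat = 1 ->
  (forall m, INR (S (S m)) * INR (S m) * v (S (S m)) = if Nat.leb k1 m then c * v (m - k1)%nat else 0) ->
  forall n, conv F v n = - Dr v n.
Proof.
  intros HR HF0 Hv0 Hv1 Hvr.
  set (e := fun n => conv F v n + Dr v n).
  assert (HDe : forall n, Dr e n = conv F e n).
  { intros n. unfold e.
    assert (Dr (fun n => conv F v n + Dr v n) n = Dr (conv F v) n + Dr (Dr v) n) as ->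
      by (unfold Dr; ring).
    rewrite conv_D.
    rewrite (conv_ext (Dr F) (fun i => conv F F i - (if Nat.eqb i k1 then c else 0)) v v)
      by (auto).
    rewrite conv_minus_l, conv_delta_l, conv_assoc.
    assert (Dr (Dr v) n = if Nat.leb k1 n then c * v (n - k1)%nat else 0) as ->.
    { rewrite <- Hvr. unfold Dr. ring. }
    rewrite conv_plus_r. ring. }
  assert (He : forall n, e n = 0).
  { intros n. induction n as [n IH] using (well_founded_induction Wf_nat.lt_wf). destruct n.
    - unfold e, conv, Dr. simpl. rewrite HF0, Hv0, Hv1. lra.
    - assert (Dr e n = 0).
      { rewrite HDe. apply conv_zero_r. intros. apply IH. lia. }
      unfold Dr in H. assert (INR (S n) <> 0) by (apply not_0_INR; lia).
      apply Rmult_integral in H. destruct H; [contradiction|auto]. }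
  intros n. specialize (He n). unfold e in He. lra.
Qed.

Fixpoint qs (rho : R) (v : nat -> R) (m : nat) : R :=
  match m with O => / rho | S m' => (qs rho v m' - v (S m')) / rho end.

Definition mulzr (rho : R) (a : nat -> R) (n : nat) : R :=
  (match n with O => 0 | S m => a m end) - rho * a n.

Lemma mulzr_inj rho a : rho <> 0 -> (forall n, mulzr rho a n = 0) -> forall n, a n = 0.
Proof. intros Hr H n. induction n.
  - specialize (H O). unfold mulzr in H. assert (rho * a O = 0) by lra.
    apply Rmult_integral in H0. destruct H0; [contradiction|auto].
  - specialize (H (S n)). unfold mulzr in H. rewrite IHn in H. 
    assert (rho * a (S n) = 0) by lra. apply Rmult_integral in H0. destruct H0; [contradiction|auto].
Qed.

Lemma conv_mulzr rho F q n : conv F (mulzr rho q) n = mulzr rho (conv F q) n.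
Proof.
  unfold mulzr. destruct n.
  - unfold conv. simpl. ring.
  - unfold conv at 1. rewrite (sm_ext _ (fun i => F i * (match (S n - i)%nat with O => 0 | S m => q m end) - rho * (F i * q (S n - i)%nat))) by (intros; ring).
    rewrite sm_minus, sm_scal. fold (conv F q (S n)). f_equal.
    cbn [sm]. replace (S n - n)%nat with 1%nat by lia. unfold conv. cbn [sm].
    rewrite Nat.sub_diag.
    assert (sm (fun i => F i * match (S n - i)%nat with O => 0 | S m => q m end) n =
            sm (fun i => F i * q (n - i)%nat) n) as ->. 
    { apply sm_ext. intros. replace (S n - i)%nat with (S (n - i)) by lia. reflexivity. }
    rewrite Nat.sub_diag. ring.
Qed.

Lemma qs_v rho v : rho <> 0 -> v O = -1 -> forall n, v n = mulzr rho (qs rho v) n.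
Proof. intros Hr Hv0 n. unfold mulzr. destruct n; simpl. rewrite Hv0. field; auto. field; auto. Qed.

Lemma geo_conv rho q n : rho <> 0 ->
  mulzr rho (conv (fun i => (/ rho) ^ (S i)) q) n = - q n.
Proof.
  intros Hr. unfold mulzr.
  assert (Hc : forall m, rho * conv (fun i => (/ rho) ^ (S i)) q m =
     q m + match m with O => 0 | S m' => conv (fun i => (/ rho) ^ (S i)) q m' end).
  { intros m. unfold conv. rewrite <- sm_scal. rewrite sm_shift1.
    destruct m.
    - simpl. field. auto.
    - rewrite (sm_ext _ (fun i => (/ rho) ^ S i * q (m - i)%nat)).
      + simpl. field. auto.
      + intros i Hi. replace (S m - S i)%nat with (m - i)%nat by lia.
        simpl. field. auto. }
  rewrite Hc. destruct n; ring.
Qed.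

Lemma Dv_q rho v n : rho <> 0 -> v O = -1 ->
  Dr v n = qs rho v n + mulzr rho (Dr (qs rho v)) n.
Proof.
  intros Hr Hv0. unfold Dr, mulzr. rewrite (qs_v rho v Hr Hv0 (S n)). unfold mulzr.
  destruct n.
  - simpl. ring.
  - rewrite S_INR. ring.
Qed.

Lemma hq_id rho F v : rho <> 0 -> v O = -1 ->
  (forall n, conv F v n = - Dr v n) ->
  forall n, conv (fun i => F i - (/ rho) ^ (S i)) (qs rho v) n = - Dr (qs rho v) n.
Proof.
  intros Hr Hv0 HFv.
  set (q := qs rho v).
  set (W := conv (fun i => (/ rho) ^ (S i)) q).
  assert (H0 : forall n, conv F q n + Dr q n - W n = 0).
  { apply (mulzr_inj rho); auto. intros n.
    assert (mulzr rho (fun n => conv F q n + Dr q n - W n) n =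
            mulzr rho (conv F q) n + mulzr rho (Dr q) n - mulzr rho W n) as ->
      by (unfold mulzr; destruct n; ring).
    unfold W. rewrite geo_conv by auto.
    rewrite <- conv_mulzr.
    rewrite (conv_ext F F (mulzr rho q) v); auto.
    2:{ intros. symmetry. apply qs_v; auto. }
    rewrite HFv. unfold q. rewrite (Dv_q rho v n) by auto. ring. }
  intros n. rewrite conv_minus_l. fold q. fold W. specialize (H0 n). lra.
Qed.

Lemma is_derive_ext_eq (f : R -> R) (x l1 l2 : R) : is_derive f x l1 -> l1 = l2 -> is_derive f x l2.
Proof. intros H ->. auto. Qed.

Lemma is_derive_extR (f g : R -> R) (x l : R) : (forall t : R, f t = g t) -> is_derive f x l -> is_derive g x l.
Proof. intros H. apply is_derive_ext. exact H. Qed.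

Lemma mono (f f' : R -> R) (a b : R) : (forall x, is_derive f x (f' x)) -> a <= b ->
  (forall x, a <= x <= b -> 0 <= f' x) -> f a <= f b.
Proof.
  intros Hd Hab Hp. destruct (Req_dec a b) as [->|Hne]. lra.
  destruct (MVT_cor2 f f' a b) as [c [Hc1 Hc2]]. lra.
  intros. apply is_derive_Reals. auto.
  assert (0 <= f' c) by (apply Hp; lra). nra.
Qed.

Lemma is_derive_powS n x : is_derive (fun t => t ^ (S n)) x (INR (S n) * x ^ n).
Proof. auto_derive. auto. rewrite S_INR. destruct n; simpl; ring. Qed.

Lemma lin_combo (g f : R -> R) (a x dg df : R) : is_derive g x dg -> is_derive f x df ->
  is_derive (fun t => a * g t - f t) x (a * dg - df).
Proof. intros Hg Hf. apply (is_derive_minus (fun t => a * g t) f). apply (is_derive_scal g). auto. auto. Qed.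

Lemma cmp1 (k1 : nat) (c X : R) (f f' w : R -> R) (W : R) : 0 <= c ->
  (forall x, is_derive f x (f' x)) -> (forall x, is_derive f' x (c * x ^ k1 * w x)) ->
  f 0 = 0 -> f' 0 = 0 -> (forall x, 0 <= x <= X -> w x <= W) ->
  forall x, 0 <= x <= X -> f x <= W * (c * x ^ (S (S k1)) / (INR (S k1) * INR (S (S k1)))).
Proof.
  intros Hc Hf Hf' H0 H0' Hw.
  assert (Hk1 : 0 < INR (S k1)) by (apply lt_0_INR; lia).
  assert (Hk2 : 0 < INR (S (S k1))) by (apply lt_0_INR; lia).
  set (d1 := fun x => W * c * x ^ (S k1) / INR (S k1) - f' x).
  set (d := fun x => W * (c * x ^ (S (S k1)) / (INR (S k1) * INR (S (S k1)))) - f x).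
  assert (Dd1 : forall x, is_derive d1 x (c * x ^ k1 * (W - w x))).
  { intros x. unfold d1. 
    apply (is_derive_extR (fun t => (W * c / INR (S k1)) * t ^ (S k1) - f' t)).
    intros t. field. lra. eapply is_derive_ext_eq. apply lin_combo. apply is_derive_powS. apply Hf'.
    field. lra. }
  assert (Dd : forall x, is_derive d x (d1 x)).
  { intros x. unfold d, d1.
    apply (is_derive_extR (fun t => (W * c / (INR (S k1) * INR (S (S k1)))) * t ^ (S (S k1)) - f t)).
    intros t. field. split; lra. eapply is_derive_ext_eq. apply lin_combo. apply is_derive_powS. apply Hf.
    field. split; lra. }
  intros x Hx.
  assert (Hd1 : forall t, 0 <= t <= X -> 0 <= d1 t).
  { intros t Ht. assert (E : d1 0 = 0) by (unfold d1; rewrite H0', pow_i by lia; field; lra).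
    rewrite <- E. apply (mono d1 (fun x => c * x ^ k1 * (W - w x)) 0 t).
    - intros; apply Dd1.
    - lra.
    - intros s Hs. apply Rmult_le_pos. apply Rmult_le_pos; auto. apply pow_le; lra.
      assert (w s <= W) by (apply Hw; lra). lra. }
  assert (0 <= d x).
  { assert (E : d 0 = 0) by (unfold d; rewrite H0, pow_i by lia; field; split; lra).
    rewrite <- E. apply (mono d d1 0 x).
    - intros; apply Dd.
    - lra.
    - intros. apply Hd1. lra. }
  unfold d in H. lra.
Qed.

Lemma cmp (k1 : nat) (c X : R) (f f' w : R -> R) (W : R) : 0 <= c ->
  (forall x, is_derive f x (f' x)) -> (forall x, is_derive f' x (c * x ^ k1 * w x)) ->
  f 0 = 0 -> f' 0 = 0 -> (forall x, 0 <= x <= X -> Rabs (w x) <= W) ->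
  forall x, 0 <= x <= X -> Rabs (f x) <= W * (c * x ^ (S (S k1)) / (INR (S k1) * INR (S (S k1)))).
Proof.
  intros Hc Hf Hf' H0 H0' Hw x Hx.
  apply Rabs_le. split.
  - assert (- f x <= W * (c * x ^ (S (S k1)) / (INR (S k1) * INR (S (S k1))))); [|lra].
    apply (cmp1 k1 c X (fun x => - f x) (fun x => - f' x) (fun x => - w x) W); auto.
    + intros. apply (is_derive_opp f). auto.
    + intros t. eapply is_derive_ext_eq. apply (is_derive_opp f'). auto. unfold opp; simpl. ring.
    + rewrite H0; lra.
    + rewrite H0'; lra.
    + intros t Ht. specialize (Hw t Ht). apply Rabs_le_between in Hw. lra.
  - apply (cmp1 k1 c X f f' w W); auto.
    intros t Ht. specialize (Hw t Ht). apply Rabs_le_between in Hw. lra.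
Qed.

Lemma dmul (f g : R -> R) (x df dg : R) : is_derive f x df -> is_derive g x dg ->
  is_derive (fun t => f t * g t) x (df * g x + f x * dg).
Proof. intros Hf Hg. eapply is_derive_ext_eq. apply (is_derive_mult f g x df dg Hf Hg).
  intros; apply Rmult_comm. unfold plus, mult; simpl. ring. Qed.

Lemma dplus (f g : R -> R) (x df dg : R) : is_derive f x df -> is_derive g x dg ->
  is_derive (fun t => f t + g t) x (df + dg).
Proof. intros Hf Hg. apply (is_derive_plus f g x df dg Hf Hg). Qed.

Lemma dminus (f g : R -> R) (x df dg : R) : is_derive f x df -> is_derive g x dg ->
  is_derive (fun t => f t - g t) x (df - dg).
Proof. intros Hf Hg. apply (is_derive_minus f g x df dg Hf Hg). Qed.

Lemma dopp (f : R -> R) (x df : R) : is_derive f x df -> is_derive (fun t => - f t) x (- df).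
Proof. intros Hf. apply (is_derive_opp f x df Hf). Qed.

Lemma dexpm (a x : R) : is_derive (fun t => exp (a * t)) x (a * exp (a * x)).
Proof. auto_derive. auto. ring. Qed.

Definition yf (u : R -> R) (x : R) := exp (-1 * x) * u x.
Definition zf (u u' : R -> R) (x : R) := exp (-1 * x) * (u' x - u x).



Lemma y_der (c : R) (k1 : nat) (u u' : R -> R) :
  (forall x, is_derive u x (u' x)) ->
  forall x, is_derive (yf u) x (zf u u' x).
Proof. intros Hu x. unfold yf, zf. eapply is_derive_ext_eq. apply dmul. apply dexpm. apply Hu. cbv beta. ring. Qed.

Lemma z_der (c : R) (k1 : nat) (u u' : R -> R) :
  (forall x, is_derive u x (u' x)) ->
  (forall x, is_derive u' x (2 * u' x - (1 - c * x ^ k1) * u x)) ->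
  forall x, is_derive (zf u u') x (c * x ^ k1 * yf u x).
Proof. intros Hu Hu' x. unfold yf, zf. eapply is_derive_ext_eq. apply dmul. apply dexpm.
  apply dminus. apply Hu'. apply Hu. cbv beta. ring. Qed.

Lemma energy (c : R) (k1 : nat) (u u' : R -> R) (X : R) :
  (forall x, is_derive u x (u' x)) ->
  (forall x, is_derive u' x (2 * u' x - (1 - c * x ^ k1) * u x)) ->
  u 0 = -1 -> u' 0 = 0 ->
  (forall x, 0 <= x <= X -> 0 <= c * x ^ k1 <= 9) ->
  forall x, 0 <= x <= X -> yf u x * yf u x <= 2 * exp (10 * x).
Proof.
  intros Hu Hu' H0 H0' Hg x Hx.
  set (G := fun t => - ((yf u t * yf u t + zf u u' t * zf u u' t) * exp (-10 * t))).
  set (G' := fun t => (10 * (yf u t * yf u t + zf u u' t * zf u u' t)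
      - (2 * yf u t * zf u u' t + 2 * zf u u' t * (c * t ^ k1 * yf u t))) * exp (-10 * t)).
  assert (HG : forall t, is_derive G t (G' t)).
  { intros t. unfold G, G'. eapply is_derive_ext_eq.
    apply (dopp (fun t => (yf u t * yf u t + zf u u' t * zf u u' t) * exp (-10 * t))).
    apply dmul. apply dplus.
    apply dmul; apply (y_der c k1 u u' Hu).
    apply dmul; apply (z_der c k1 u u' Hu Hu').
    apply dexpm. cbv beta. ring. }
  assert (G 0 <= G x).
  { apply (mono G G'). exact HG. lra. intros t Ht. unfold G'. apply Rmult_le_pos; [|apply Rlt_le, exp_pos].
    destruct (Hg t ltac:(lra)) as [g0 g9]. set (g := c * t ^ k1) in *.
    set (a := yf u t). set (b := zf u u' t).
    assert (0 <= (1 + g) * ((a - b) * (a - b))).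
    { apply Rmult_le_pos. lra. apply Rle_0_sqr. }
    assert (0 <= (9 - g) * (a * a + b * b)).
    { apply Rmult_le_pos. lra. pose proof (Rle_0_sqr a); pose proof (Rle_0_sqr b); unfold Rsqr in *; lra. }
    replace (10 * (a * a + b * b) - (2 * a * b + 2 * b * (g * a))) with
      ((1 + g) * ((a - b) * (a - b)) + (9 - g) * (a * a + b * b)) by ring. lra. }
  unfold G in H. unfold yf, zf in H. rewrite H0, H0' in H.
  replace (-10 * 0) with 0 in H by ring. replace (-1 * 0) with 0 in H by ring. rewrite exp_0 in H.
  fold (yf u x) (zf u u' x) in H.
  assert (Hz : 0 <= zf u u' x * zf u u' x) by apply Rle_0_sqr.
  assert (He : exp (-10 * x) * exp (10 * x) = 1) by (rewrite <- exp_plus; replace (-10 * x + 10 * x) with 0 by ring; apply exp_0).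
  assert (Hp : 0 < exp (10 * x)) by apply exp_pos.
  assert ((yf u x * yf u x + zf u u' x * zf u u' x) * exp (-10 * x) <= 2) by lra.
  assert ((yf u x * yf u x + zf u u' x * zf u u' x) * exp (-10 * x) * exp (10 * x) <= 2 * exp (10 * x)).
  { apply Rmult_le_compat_r; lra. }
  rewrite Rmult_assoc, He in H2. lra.
Qed.

Lemma hbound (h q : nat -> R) (R : R) : 0 < R -> 0 < q O ->
  (forall n, conv h q n = - Dr q n) ->
  (forall n, INR (S n) * Rabs (q (S n)) * R ^ n <= q O / 2) ->
  (forall n, sm (fun i => Rabs (q (S i)) * R ^ (S i)) n <= q O / 2) ->
  forall n, Rabs (h n) * R ^ n <= 1.
Proof.
  intros HR Hq0 Hc HA HB n.
  induction n as [n IH] using (well_founded_induction Wf_nat.lt_wf).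
  assert (Hid : h n * q O = - Dr q n - sm (fun i => h i * q (n - i)%nat) n).
  { rewrite <- (Hc n). rewrite conv_last. ring. }
  assert (HRn : 0 < R ^ n) by (apply pow_lt; auto).
  assert (Hsum : Rabs (sm (fun i => h i * q (n - i)%nat) n) * R ^ n <= q O / 2).
  { eapply Rle_trans. apply Rmult_le_compat_r. lra. apply sm_abs.
    rewrite <- sm_scalr.
    eapply Rle_trans. apply (sm_le _ (fun i => Rabs (q (S (n - 1 - i)%nat)) * R ^ (S (n - 1 - i)))).
    - intros i Hi. replace (S (n - 1 - i)) with (n - i)%nat by lia.
      rewrite Rabs_mult.
      replace (R ^ n) with (R ^ i * R ^ (n - i)) by (rewrite <- pow_add; f_equal; lia).
      specialize (IH i Hi).
      assert (0 <= Rabs (q (n - i)%nat) * R ^ (n - i)).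
      { apply Rmult_le_pos. apply Rabs_pos. apply pow_le. lra. }
      replace (Rabs (h i) * Rabs (q (n - i)%nat) * (R ^ i * R ^ (n - i))) with
        ((Rabs (h i) * R ^ i) * (Rabs (q (n - i)%nat) * R ^ (n - i))) by ring.
      rewrite <- (Rmult_1_l (Rabs (q (n - i)%nat) * R ^ (n - i))) at 2.
      apply Rmult_le_compat_r; auto.
    - rewrite (sm_rev (fun j => Rabs (q (S j)) * R ^ (S j)) n). apply HB. }
  assert (HD : Rabs (Dr q n) * R ^ n <= q O / 2).
  { unfold Dr. rewrite Rabs_mult. rewrite Rabs_pos_eq by (apply pos_INR). apply HA. }
  assert (Rabs (h n) * q O * R ^ n <= q O).
  { replace (Rabs (h n) * q O) with (Rabs (h n * q O)) by (rewrite Rabs_mult, (Rabs_pos_eq (q O)); lra).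
    rewrite Hid.
    eapply Rle_trans. apply Rmult_le_compat_r. lra. 
    unfold Rminus. eapply Rle_trans. apply Rabs_triang. rewrite !Rabs_Ropp. apply Rle_refl.
    lra. }
  assert (Rabs (h n) * R ^ n * q O <= 1 * q O) by lra.
  apply Rmult_le_reg_r in H0; auto.
Qed.

Definition Pp (v : nat -> R) (M : nat) (x : R) := sm (fun j => v j * x ^ j) M.
Definition P1 (v : nat -> R) (M : nat) (x : R) := sm (fun j => INR j * v j * x ^ (j - 1)) M.
Definition P2 (v : nat -> R) (M : nat) (x : R) := sm (fun j => INR j * INR (j - 1) * v j * x ^ (j - 2)) M.

Lemma dsm (f df : nat -> R -> R) (M : nat) (x : R) :
  (forall j x, is_derive (f j) x (df j x)) ->
  is_derive (fun x => sm (fun j => f j x) M) x (sm (fun j => df j x) M).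
Proof.
  intros H. induction M.
  - simpl. apply (is_derive_const 0).
  - simpl. apply dplus. apply IHM. apply H.
Qed.

Lemma dmono (a : R) (n : nat) (x : R) : is_derive (fun t => a * t ^ n) x (a * (INR n * x ^ (n - 1))).
Proof. auto_derive. auto. destruct n. simpl. ring. rewrite Nat.sub_1_r. simpl pred. ring. Qed.

Lemma Pp_der v M x : is_derive (Pp v M) x (P1 v M x).
Proof.
  unfold Pp, P1. eapply is_derive_ext_eq.
  apply (dsm (fun j t => v j * t ^ j) (fun j t => v j * (INR j * t ^ (j - 1)))).
  intros. apply dmono. apply sm_ext. intros. ring.
Qed.

Lemma P1_der v M x : is_derive (P1 v M) x (P2 v M x).
Proof.
  unfold P1, P2. eapply is_derive_ext_eq.
  apply (dsm (fun j t => (INR j * v j) * t ^ (j - 1)) (fun j t => (INR j * v j) * (INR (j - 1) * t ^ (j - 1 - 1)))).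
  intros. apply dmono. apply sm_ext. intros. replace (i - 1 - 1)%nat with (i - 2)%nat by lia. ring.
Qed.

Lemma P2_id (c : R) (k1 : nat) (v : nat -> R) :
  (forall m, INR (S (S m)) * INR (S m) * v (S (S m)) = if Nat.leb k1 m then c * v (m - k1)%nat else 0) ->
  forall M x, P2 v M x = c * x ^ k1 * Pp v (M - S (S k1)) x.
Proof.
  intros Hvr M x. induction M.
  - unfold P2, Pp. simpl. ring.
  - unfold P2 in *. cbn [sm]. rewrite IHM.
    destruct (Compare_dec.le_lt_dec M (S k1)) as [Hle|Hlt].
    + replace (S M - S (S k1))%nat with 0%nat by lia. replace (M - S (S k1))%nat with 0%nat by lia.
      destruct M as [|[|m]].
      * simpl. ring.
      * simpl. ring.
      * specialize (Hvr m). assert (Nat.leb k1 m = false) as E by (apply Nat.leb_gt; lia).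
        rewrite E in Hvr.
        replace (S (S m) - 1)%nat with (S m) by lia. replace (S (S m) - 2)%nat with m by lia.
        rewrite Hvr. ring.
    + destruct M as [|[|m]]; try lia.
      replace (S (S (S m)) - S (S k1))%nat with (S (m - k1)) by lia.
      replace (S (S m) - S (S k1))%nat with (m - k1)%nat by lia.
      unfold Pp. cbn [sm].
      specialize (Hvr m). assert (Nat.leb k1 m = true) as E by (apply Nat.leb_le; lia).
      rewrite E in Hvr.
      replace (S (S m) - 1)%nat with (S m) by lia. replace (S (S m) - 2)%nat with m by lia.
      replace (INR (S (S m)) * INR (S m) * v (S (S m)) * x ^ m) with (c * v (m - k1)%nat * x ^ m)
        by (rewrite <- Hvr; ring).
      replace m with (k1 + (m - k1))%nat at 3 by lia. rewrite pow_add. ring.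
Qed.

Definition ef u v M x := yf u x - Pp v M x.
Definition e1f u u' v M x := zf u u' x - P1 v M x.

Lemma e_der (c : R) (k1 : nat) u u' v M x : (forall x, is_derive u x (u' x)) ->
  is_derive (ef u v M) x (e1f u u' v M x).
Proof. intros Hu. unfold ef, e1f. apply dminus. apply (y_der c k1); auto. apply Pp_der. Qed.

Lemma e1_der (c : R) (k1 : nat) u u' v M x :
  (forall x, is_derive u x (u' x)) ->
  (forall x, is_derive u' x (2 * u' x - (1 - c * x ^ k1) * u x)) ->
  (forall m, INR (S (S m)) * INR (S m) * v (S (S m)) = if Nat.leb k1 m then c * v (m - k1)%nat else 0) ->
  is_derive (e1f u u' v M) x (c * x ^ k1 * ef u v (M - S (S k1)) x).
Proof. intros Hu Hu' Hvr. unfold ef, e1f. eapply is_derive_ext_eq. apply dminus.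
  apply (z_der c k1); auto. apply P1_der. rewrite (P2_id c k1 v Hvr). ring. Qed.

Lemma Pp_S v M x : Pp v (S M) x = Pp v M x + v M * x ^ M.
Proof. reflexivity. Qed.
Lemma P1_S v M x : P1 v (S M) x = P1 v M x + INR M * v M * x ^ (M - 1).
Proof. reflexivity. Qed.

Lemma Pp0 v d : Pp v (S d) 0 = v O.
Proof. induction d. unfold Pp. simpl. ring. rewrite Pp_S, IHd. rewrite pow_i by lia. ring. Qed.

Lemma P10 v d : P1 v (S (S d)) 0 = v 1%nat.
Proof. induction d. unfold P1. simpl. ring. rewrite P1_S, IHd.
  replace (S (S d) - 1)%nat with (S d) by lia. rewrite pow_i by lia. ring. Qed.

Lemma picard (c : R) (k1 : nat) u u' v (X Y : R) :
  (forall x, is_derive u x (u' x)) ->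
  (forall x, is_derive u' x (2 * u' x - (1 - c * x ^ k1) * u x)) ->
  u 0 = -1 -> u' 0 = 0 -> v O = -1 -> v 1%nat = 1 ->
  (forall m, INR (S (S m)) * INR (S m) * v (S (S m)) = if Nat.leb k1 m then c * v (m - k1)%nat else 0) ->
  0 <= c -> 0 <= X -> 0 <= Y ->
  c * X ^ (S (S k1)) / (INR (S k1) * INR (S (S k1))) <= 1 ->
  (forall x, 0 <= x <= X -> Rabs (yf u x) <= Y) ->
  forall i M, (2 + i * S (S k1) <= M)%nat -> forall x, 0 <= x <= X ->
    Rabs (ef u v M x) <= (Y + 1) * (c * X ^ (S (S k1)) / (INR (S k1) * INR (S (S k1)))) ^ (S i).
Proof.
  intros Hu Hu' Hu0 Hu'0 Hv0 Hv1 Hvr Hc HX HY Hb Hy.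
  set (b := c * X ^ (S (S k1)) / (INR (S k1) * INR (S (S k1)))) in *.
  assert (Hk : 0 < INR (S k1) * INR (S (S k1))) by (apply Rmult_lt_0_compat; apply lt_0_INR; lia).
  assert (Hb0 : 0 <= b) by (unfold b; apply Rmult_le_pos; [apply Rmult_le_pos; auto; apply pow_le; lra | apply Rlt_le, Rinv_0_lt_compat; auto]).
  assert (step : forall M W, (2 <= M)%nat -> (forall x, 0 <= x <= X -> Rabs (ef u v (M - S (S k1)) x) <= W) ->
             forall x, 0 <= x <= X -> Rabs (ef u v M x) <= W * b).
  { intros M W HM HW x Hx.
    assert (HW0 : 0 <= W) by (eapply Rle_trans; [apply Rabs_pos | apply (HW 0); lra]).
    eapply Rle_trans. apply (cmp k1 c X (ef u v M) (e1f u u' v M) (ef u v (M - S (S k1))) W); auto.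
    - intros; apply (e_der c k1); auto.
    - intros; apply (e1_der c k1); auto.
    - unfold ef, yf. replace M with (S (M - 1)) by lia. rewrite Pp0. rewrite Hu0, Hv0.
      replace (-1 * 0) with 0 by ring. rewrite exp_0. ring.
    - unfold e1f, zf. replace M with (S (S (M - 2))) by lia. rewrite P10. rewrite Hu0, Hu'0, Hv1.
      replace (-1 * 0) with 0 by ring. rewrite exp_0. ring.
    - apply Rmult_le_compat_l; auto. unfold b. unfold Rdiv. apply Rmult_le_compat_r.
      apply Rlt_le, Rinv_0_lt_compat; auto. apply Rmult_le_compat_l; auto. apply pow_incr. lra. }
  assert (B0 : forall M, (2 <= M)%nat -> forall x, 0 <= x <= X -> Rabs (ef u v M x) <= (Y + 1) * b).
  { intros M. induction M as [M IH] using (well_founded_induction Wf_nat.lt_wf). intros HM.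
    apply step; auto. intros x Hx.
    destruct (M - S (S k1))%nat as [|[|m]] eqn:Em.
    - unfold ef, Pp. simpl. rewrite Rminus_0_r. specialize (Hy x Hx). lra.
    - unfold ef, Pp. simpl. rewrite Hv0. replace (yf u x - (0 + -1 * 1)) with (yf u x + 1) by ring.
      eapply Rle_trans. apply Rabs_triang. rewrite Rabs_R1. specialize (Hy x Hx). lra.
    - eapply Rle_trans. apply (IH (S (S m))). lia. lia. auto.
      rewrite <- (Rmult_1_r (Y + 1)) at 2. apply Rmult_le_compat_l; lra. }
  intros i. induction i.
  - intros M HM. simpl pow. rewrite Rmult_1_r. apply B0. lia.
  - intros M HM x Hx. replace ((Y + 1) * b ^ S (S i)) with ((Y + 1) * b ^ S i * b) by (simpl; ring).
    apply (step M); auto. lia. intros t Ht. apply IHi; auto. simpl in HM |- *. lia.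
Qed.

Lemma fact_pos_R n : 0 < INR (Factorial.fact n).
Proof. apply lt_0_INR. apply Factorial.lt_O_fact. Qed.

Lemma nlab_bound t : 0 < nlab t /\ nlab t <= INR (Factorial.fact (psize t)).
Proof.
  induction t as [|l [IHl1 IHl2] r [IHr1 IHr2]]; cbn [psize nlab]; try rewrite fact_simpl.
  - simpl. lra.
  - assert (HC : Binomial.C (psize l + psize r) (psize l) * INR (Factorial.fact (psize l)) * INR (Factorial.fact (psize r))
                = INR (Factorial.fact (psize l + psize r))).
    { unfold Binomial.C. replace (psize l + psize r - psize l)%nat with (psize r) by lia.
      pose proof (fact_pos_R (psize l)). pose proof (fact_pos_R (psize r)). field. lra. }
    assert (HC0 : 0 < Binomial.C (psize l + psize r) (psize l)).
    { unfold Binomial.C. apply Rdiv_lt_0_compat. apply fact_pos_R. apply Rmult_lt_0_compat; apply fact_pos_R. }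
    split.
    + apply Rmult_lt_0_compat. apply Rmult_lt_0_compat; auto. auto.
    + rewrite mult_INR. rewrite <- HC.
      assert (Binomial.C (psize l + psize r) (psize l) * nlab l * nlab r <=
              Binomial.C (psize l + psize r) (psize l) * INR (Factorial.fact (psize l)) * INR (Factorial.fact (psize r))).
      { apply Rmult_le_compat. apply Rlt_le, Rmult_lt_0_compat; auto. lra.
        apply Rmult_le_compat_l; lra. auto. }
      assert (1 <= INR (S (psize l + psize r))) by (apply (le_INR 1); lia).
      assert (0 < Binomial.C (psize l + psize r) (psize l) * INR (Factorial.fact (psize l)) * INR (Factorial.fact (psize r))).
      { rewrite HC. apply fact_pos_R. }
      nra.
Qed.

Lemma c_bounds t : (1 <= psize t)%nat -> 0 < wt t * INR (psize t) <= 1.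
Proof.
  intros H. destruct t as [|l r]. simpl in H. lia.
  pose proof (nlab_bound (Node l r)) as [H1 H2]. unfold wt.
  cbn [psize nlab] in *. rewrite fact_simpl in *.
  set (N := (psize l + psize r)%nat) in *.
  assert (0 < INR (S N)) by (apply lt_0_INR; lia).
  pose proof (fact_pos_R N).
  rewrite mult_INR.
  set (L := Binomial.C N (psize l) * nlab l * nlab r) in *.
  assert (L <= INR (Factorial.fact N)).
  {
    unfold L. pose proof (nlab_bound l) as [? ?]. pose proof (nlab_bound r) as [? ?].
    assert (HC : Binomial.C N (psize l) * INR (Factorial.fact (psize l)) * INR (Factorial.fact (psize r))
                = INR (Factorial.fact N)).
    { unfold Binomial.C, N. replace (psize l + psize r - psize l)%nat with (psize r) by lia.
      pose proof (fact_pos_R (psize l)). pose proof (fact_pos_R (psize r)). field. lra. }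
    assert (HC0 : 0 < Binomial.C N (psize l)).
    { unfold Binomial.C. apply Rdiv_lt_0_compat. apply fact_pos_R. apply Rmult_lt_0_compat; apply fact_pos_R. }
    rewrite <- HC. apply Rmult_le_compat. apply Rlt_le, Rmult_lt_0_compat; auto. lra.
    apply Rmult_le_compat_l; lra. auto. }
  replace (L / (INR (S N) * INR (Factorial.fact N)) * INR (S N)) with (L / INR (Factorial.fact N)) by (field; lra).
  split. apply Rdiv_lt_0_compat; auto.
  apply Rmult_le_reg_r with (INR (Factorial.fact N)); auto. unfold Rdiv. rewrite Rmult_assoc, Rinv_l by lra. lra.
Qed.

Definition Fs (s : nat -> R) (n : nat) : R := (if Nat.eqb n 0 then 1 else 0) + s n.

Lemma ric (s : nat -> R) (c : R) (k1 : nat) : s O = 0 ->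
  (forall n, INR (S n) * s (S n) = (if Nat.eqb n 0 then 1 else 0) + 2 * s n
      + sum_f_R0 (fun i => s i * s (n - i)%nat) n - (if Nat.eqb n k1 then c else 0)) ->
  forall n, Dr (Fs s) n = conv (Fs s) (Fs s) n - (if Nat.eqb n k1 then c else 0).
Proof.
  intros Hs0 H n. unfold Dr. unfold Fs at 1. simpl Nat.eqb. rewrite Rplus_0_l. rewrite H.
  unfold conv, Fs.
  rewrite (sm_ext _ (fun i => ((if Nat.eqb i 0 then (if Nat.eqb n 0 then 1 else 0) else 0)
       + (if Nat.eqb i 0 then s n else 0)) + ((if Nat.eqb i n then s n else 0) + s i * s (n - i)%nat))).
  - rewrite !sm_plus, !sm_delta, sum_f_R0_sm.
    destruct (Nat.ltb_spec 0 (S n)); [|lia]. destruct (Nat.ltb_spec n (S n)); [|lia]. ring.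
  - intros i Hi. destruct (Nat.eqb_spec i 0); destruct (Nat.eqb_spec i n); destruct (Nat.eqb_spec (n - i) 0);
      destruct (Nat.eqb_spec n 0); subst; try lia; try (rewrite Nat.sub_0_r); try (rewrite Nat.sub_diag); try rewrite Hs0; try ring.
Qed.

Fixpoint vf (c : R) (k1 : nat) (fuel m : nat) : R :=
  match fuel with
  | O => 0
  | S f => match m with
           | O => -1
           | S O => 1
           | S (S m') => if Nat.leb k1 m' then c * vf c k1 f (m' - k1) / (INR (S (S m')) * INR (S m')) else 0
           end
  end.

Definition vc c k1 m := vf c k1 (S m) m.

Lemma vf_fuel c k1 f1 : forall f2 m, (m < f1)%nat -> (m < f2)%nat -> vf c k1 f1 m = vf c k1 f2 m.
Proof.
  induction f1; intros f2 m H1 H2. lia. destruct f2. lia.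
  destruct m as [|[|m']]; simpl; auto. destruct (Nat.leb k1 m'); auto.
  rewrite (IHf1 f2); auto; lia.
Qed.

Lemma vc0 c k1 : vc c k1 O = -1. Proof. reflexivity. Qed.
Lemma vc1 c k1 : vc c k1 1%nat = 1. Proof. reflexivity. Qed.
Lemma vrec c k1 m : INR (S (S m)) * INR (S m) * vc c k1 (S (S m)) =
   if Nat.leb k1 m then c * vc c k1 (m - k1)%nat else 0.
Proof.
  unfold vc.
  assert (E : vf c k1 (S (S (S m))) (S (S m)) = if Nat.leb k1 m then c * vf c k1 (S (S m)) (m - k1) / (INR (S (S m)) * INR (S m)) else 0) by reflexivity.
  rewrite E. destruct (Nat.leb k1 m).
  - rewrite (vf_fuel c k1 (S (S m)) (S (m - k1)) (m - k1)) by lia.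
    assert (0 < INR (S m)) by (apply lt_0_INR; lia). assert (0 < INR (S (S m))) by (apply lt_0_INR; lia).
    field. lra.
  - ring.
Qed.

Lemma exp_ge1 a : 0 <= a -> 1 + a <= exp a.
Proof. intros H. destruct (Req_dec a 0) as [->|Hn]. rewrite exp_0; lra. left. apply exp_ineq1. auto. Qed.

Lemma ln_le_xm1 x : 0 < x -> ln x <= x - 1.
Proof. intros H. destruct (Req_dec (ln x) 0) as [E|E].
  - rewrite E. assert (x = 1). { rewrite <- (exp_ln x H), E. apply exp_0. } lra.
  - pose proof (exp_ineq1 _ E). rewrite exp_ln in H0; auto. lra. Qed.

Lemma exp_pow_n a m : exp a ^ m = exp (INR m * a).
Proof. induction m. simpl. rewrite Rmult_0_l, exp_0. auto.
  rewrite S_INR. simpl. rewrite IHm. rewrite <- exp_plus. f_equal. ring. Qed.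

Lemma exp2_le9 : exp 2 <= 9.
Proof. replace 2 with (1 + 1) by ring. rewrite exp_plus. pose proof exp_le_3. pose proof (exp_pos 1).
  apply Rle_trans with (3 * 3). apply Rmult_le_compat; lra. lra. Qed.

Lemma Xpow_le9 (k : nat) : (1 <= k)%nat -> (1 + / INR k) ^ (S k) <= 9.
Proof. intros Hk. assert (Hk' : 1 <= INR k) by (apply (le_INR 1); auto).
  apply Rle_trans with (exp (/ INR k) ^ (S k)).
  - apply pow_incr. split. assert (0 < / INR k) by (apply Rinv_0_lt_compat; lra). lra.
    apply exp_ge1. apply Rlt_le, Rinv_0_lt_compat; lra.
  - rewrite exp_pow_n. apply Rle_trans with (exp 2). 2: apply exp2_le9.
    assert (Hle : INR (S k) * / INR k <= 2).
    { rewrite S_INR. apply Rmult_le_reg_r with (INR k). lra.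
      rewrite Rmult_assoc, Rinv_l by lra. lra. }
    destruct (Req_dec (INR (S k) * / INR k) 2) as [->|]. lra. left. apply exp_increasing. lra.
Qed.

Lemma geo_sum x n : 0 <= x <= 1/2 -> sm (fun j => x ^ (S j)) n <= 2 * x - 2 * x ^ (S n).
Proof. intros Hx. induction n. simpl. lra. cbn [sm]. 
  assert (x ^ S (S n) = x * x ^ S n) by reflexivity. 
  assert (0 <= x ^ S n) by (apply pow_le; lra). nra. Qed.

Lemma geo_sum2 x n : 0 <= x <= 1/2 -> sm (fun j => x ^ (S j)) n <= 2 * x.
Proof. intros Hx. pose proof (geo_sum x n Hx). assert (0 <= x ^ S n) by (apply pow_le; lra). lra. Qed.

Lemma pow2_ge j : INR (S j) <= 2 ^ j.
Proof. induction j. simpl. lra. rewrite (S_INR (S j)). change (2 ^ S j) with (2 * 2 ^ j). assert (1 <= 2 ^ j) by (apply pow_R1_Rle; lra). lra. Qed.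

Lemma jpow x j : 0 <= x <= 1/2 -> INR (S j) * x ^ (S j) <= x.
Proof. intros Hx. assert (x ^ j <= (1/2) ^ j) by (apply pow_incr; lra).
  assert (INR (S j) * (1/2) ^ j <= 1).
  { assert (E : (1/2) ^ j * 2 ^ j = 1) by (rewrite <- Rpow_mult_distr; replace (1/2*2) with 1 by field; apply pow1).
    pose proof (pow2_ge j). assert (0 <= (1/2) ^ j) by (apply pow_le; lra).
    apply Rle_trans with ((1/2)^j * 2^j); [|lra]. rewrite Rmult_comm. apply Rmult_le_compat_l; auto. }
  simpl pow. assert (0 <= INR (S j)) by apply pos_INR. assert (0 <= x ^ j) by (apply pow_le; lra).
  assert (INR (S j) * x ^ j <= 1) by nra. nra. Qed.

Lemma sm_const a n : sm (fun _ => a) n = INR n * a.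
Proof. induction n. simpl. ring. cbn [sm]. rewrite IHn, S_INR. ring. Qed.

Lemma block (f a : nat -> R) (p : nat) :
  (forall i r, (r < p)%nat -> f (i * p + r)%nat <= a i) ->
  forall N, sm f (N * p) <= INR p * sm a N.
Proof. intros H N. induction N. simpl. lra.
  replace (S N * p)%nat with (N * p + p)%nat by lia. rewrite sm_split. cbn [sm].
  assert (sm (fun i => f (N * p + i)%nat) p <= INR p * a N).
  { rewrite <- sm_const. apply sm_le. intros. apply H. auto. }
  lra. Qed.

Lemma qconds (q : nat -> R) (p : nat) (rho kap Y b : R) :
  (1 <= p)%nat -> 1/2 < rho -> 1 <= kap -> 0 <= Y -> 0 <= b ->
  4 * INR p * (Y + 1) * (b * kap ^ p) <= 1 ->
  (forall i m, (1 + i * p <= m)%nat -> Rabs (q m) * rho ^ (S m) <= (Y + 1) * b ^ (S i)) ->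
  (forall n, INR (S n) * Rabs (q (S n)) * (rho * kap) ^ n <= / rho / 2) /\
  (forall n, sm (fun i => Rabs (q (S i)) * (rho * kap) ^ (S i)) n <= / rho / 2).
Proof.
  intros Hp Hr Hk HY Hb Hc Hq.
  set (g := kap ^ p) in *. set (x := b * g) in *.
  assert (Hg : 1 <= g) by (apply pow_R1_Rle; lra).
  assert (HP : 1 <= INR p) by (apply (le_INR 1); auto).
  assert (Hx0 : 0 <= x) by (unfold x; apply Rmult_le_pos; lra).
  assert (Hx : x <= 1/2).
  { assert (4 * 1 * 1 * x <= 4 * INR p * (Y + 1) * x).
    { apply Rmult_le_compat_r; auto. apply Rmult_le_compat; lra. }
    lra. }
  assert (Hrho : 0 < rho) by lra.
  assert (per : forall j m, (1 + j * p <= m)%nat -> (m <= S j * p)%nat ->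
             Rabs (q m) * (rho * kap) ^ m <= (Y + 1) * x ^ (S j) / rho).
  { intros j m H1 H2.
    rewrite Rpow_mult_distr.
    replace (Rabs (q m) * (rho ^ m * kap ^ m)) with ((Rabs (q m) * rho ^ S m) * kap ^ m / rho)
      by (simpl; field; lra).
    unfold Rdiv. apply Rmult_le_compat_r. apply Rlt_le, Rinv_0_lt_compat; auto.
    unfold x. rewrite Rpow_mult_distr.
    replace ((Y + 1) * (b ^ S j * g ^ S j)) with (((Y + 1) * b ^ S j) * g ^ S j) by ring.
    apply Rmult_le_compat. apply Rmult_le_pos. apply Rabs_pos. apply pow_le; lra.
    apply pow_le; lra. apply Hq; auto.
    unfold g. rewrite <- pow_mult. apply Rle_pow; auto. lia. }
  split.
  - intros n.
    set (j := (n / p)%nat). set (r := (n mod p)%nat).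
    assert (Hn : n = (j * p + r)%nat).
    { unfold j, r. rewrite (Nat.div_mod_eq n p) at 1. lia. }
    assert (Hr' : (r < p)%nat) by (unfold r; apply Nat.mod_upper_bound; lia).
    assert (HS : INR (S n) <= INR (S j) * INR p).
    { rewrite <- mult_INR. apply le_INR. rewrite Hn. simpl. nia. }
    assert (Hm := per j (S n) ltac:(lia) ltac:(simpl; lia)).
    assert (HR : (rho * kap) ^ S n = (rho * kap) ^ n * (rho * kap)) by (simpl; ring).
    assert (HRp : 0 < rho * kap) by (apply Rmult_lt_0_compat; lra).
    assert (HRn : 0 < (rho * kap) ^ n) by (apply pow_lt; auto).
    assert (Hq1 : Rabs (q (S n)) * (rho * kap) ^ n <= 2 * ((Y + 1) * x ^ S j / rho)).
    { rewrite HR in Hm. assert (1/2 <= rho * kap) by nra.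
      assert (0 <= Rabs (q (S n)) * (rho * kap) ^ n) by (apply Rmult_le_pos; [apply Rabs_pos|lra]).
      nra. }
    assert (Hj := jpow x j (conj Hx0 Hx)).
    assert (0 <= Rabs (q (S n)) * (rho * kap) ^ n) by (apply Rmult_le_pos; [apply Rabs_pos|lra]).
    apply Rle_trans with (INR (S j) * INR p * (2 * ((Y + 1) * x ^ S j / rho))).
    { rewrite Rmult_assoc. apply Rmult_le_compat; [apply pos_INR | exact H | exact HS | exact Hq1]. }
    replace (INR (S j) * INR p * (2 * ((Y + 1) * x ^ S j / rho))) with
      (2 * INR p * (Y + 1) * (INR (S j) * x ^ S j) / rho) by (field; lra).
    assert (2 * INR p * (Y + 1) * (INR (S j) * x ^ S j) <= 1/2).
    { apply Rle_trans with (2 * INR p * (Y + 1) * x). apply Rmult_le_compat_l; auto.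
      apply Rmult_le_pos; lra. lra. }
    replace (/ rho / 2) with ((1/2) / rho) by (field; lra).
    unfold Rdiv. apply Rmult_le_compat_r. apply Rlt_le, Rinv_0_lt_compat; auto. lra.
  - intros n.
    apply Rle_trans with (sm (fun i => Rabs (q (S i)) * (rho * kap) ^ (S i)) (n * p)).
    { apply sm_mono. intros. apply Rmult_le_pos. apply Rabs_pos. apply pow_le. nra. nia. }
    eapply Rle_trans. apply (block _ (fun j => (Y + 1) * x ^ (S j) / rho)).
    { intros i r Hr'. apply per; simpl; lia. }
    rewrite (sm_ext _ (fun j => ((Y + 1) / rho) * x ^ (S j))) by (intros; field; lra).
    rewrite sm_scal. pose proof (geo_sum2 x n (conj Hx0 Hx)).
    assert (0 < (Y + 1) / rho) by (apply Rdiv_lt_0_compat; lra).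
    apply Rle_trans with (INR p * ((Y + 1) / rho * (2 * x))).
    { apply Rmult_le_compat_l. lra. apply Rmult_le_compat_l; lra. }
    replace (INR p * ((Y + 1) / rho * (2 * x))) with (2 * INR p * (Y + 1) * x / rho) by (field; lra).
    replace (/ rho / 2) with ((1/2) / rho) by (field; lra).
    unfold Rdiv. apply Rmult_le_compat_r. apply Rlt_le, Rinv_0_lt_compat; auto. lra.
Qed.

Lemma exp_le a b : a <= b -> exp a <= exp b.
Proof. intros H. destruct (Req_dec a b) as [->|]. lra. left. apply exp_increasing. lra. Qed.

Lemma ln_ge1 x : 3 <= x -> 1 <= ln x.
Proof. intros H. destruct (Rlt_le_dec (ln x) 1) as [Hl|Hl]; auto.
  assert (exp (ln x) < exp 1) by (apply exp_increasing; auto). rewrite exp_ln in H0 by lra.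
  pose proof exp_le_3. lra. Qed.

Lemma key_ineq (n k : R) : 3 <= k -> k <= n -> ln n <= n / k * ln k.
Proof. intros Hk Hn.
  assert (Hk0 : 0 < k) by lra.
  replace n with (k * (n / k)) at 1 by (field; lra).
  rewrite ln_mult; [|lra| apply Rdiv_lt_0_compat; lra].
  assert (1 <= n / k) by (apply Rmult_le_reg_r with k; auto; unfold Rdiv; rewrite Rmult_assoc, Rinv_l; lra).
  pose proof (ln_le_xm1 (n / k) ltac:(lra)). pose proof (ln_ge1 k Hk). nra. Qed.

Lemma Rpower_ge1 a b : 1 <= a -> 0 <= b -> 1 <= Rpower a b.
Proof. intros. unfold Rpower. rewrite <- exp_0. apply exp_le.
  assert (0 <= ln a). { destruct (Req_dec a 1) as [->|]. rewrite ln_1; lra. left. rewrite <- ln_1. apply ln_increasing; lra. }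
  nra. Qed.

Lemma core (eta0 Y c : R) (k1 n : nat) (s : nat -> R) (u u' : R -> R) (rho : R) :
  0 < eta0 <= 1/2 -> Y = 1 + 2 * exp 20 ->
  9 * (Y + 1) < INR (S k1) -> 3 <= INR (S k1) -> 108 * (Y + 1) <= Rpower (INR (S k1)) eta0 ->
  (S k1 <= n)%nat -> 0 < c <= 1 ->
  s O = 0 ->
  (forall n, INR (S n) * s (S n) = (if Nat.eqb n 0 then 1 else 0) + 2 * s n
      + sum_f_R0 (fun i => s i * s (n - i)%nat) n - (if Nat.eqb n k1 then c else 0)) ->
  (forall x, is_derive u x (u' x)) ->
  (forall x, is_derive u' x (2 * u' x - (1 - c * x ^ k1) * u x)) ->
  u 0 = -1 -> u' 0 = 0 ->
  0 < rho -> u rho = 0 -> (forall x, 0 < x < rho -> u x <> 0) ->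
  exists E, s n = / rho ^ (S n) * (1 + E) /\ Rabs E <= 2 / Rpower (INR n) (1 - eta0).
Proof.
  intros Heta HY Hk9 Hk3 HkA Hkn Hc Hs0 Hric Hu Hu' Hu0 Hu'0 Hr0 Hur Hmin.
  set (k := S k1) in *.
  assert (Hk1 : 1 <= INR k) by lra.
  set (X := 1 + / INR k).
  assert (HkX : 0 < / INR k <= 1) by (split; [apply Rinv_0_lt_compat; lra | rewrite <- Rinv_1; apply Rinv_le_contravar; lra]).
  assert (HX9 : X ^ (S (S k1)) <= 9) by (apply Xpow_le9; unfold k; lia).
  assert (HX1 : 1 <= X) by (unfold X; lra).
  assert (Hg : forall x, 0 <= x <= X -> 0 <= c * x ^ k1 <= 9).
  { intros x Hx. split. apply Rmult_le_pos. lra. apply pow_le; lra.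
    apply Rle_trans with (1 * X ^ (S (S k1))); [|lra]. apply Rmult_le_compat. lra. apply pow_le; lra. lra.
    apply Rle_trans with (X ^ k1). apply pow_incr; lra. apply Rle_pow; auto; lia. }
  assert (Hy : forall x, 0 <= x <= X -> Rabs (yf u x) <= Y).
  { intros x Hx. pose proof (energy c k1 u u' X Hu Hu' Hu0 Hu'0 Hg x Hx) as He.
    assert (exp (10 * x) <= exp 20) by (apply exp_le; unfold X in Hx; lra).
    assert (Hsq : yf u x * yf u x = Rabs (yf u x) * Rabs (yf u x)) by (rewrite <- Rabs_mult, Rabs_pos_eq; [ring | apply Rle_0_sqr]).
    pose proof (Rabs_pos (yf u x)). assert (0 <= (Rabs (yf u x) - 1/2) * (Rabs (yf u x) - 1/2)) by apply Rle_0_sqr.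
    assert (Rabs (yf u x) <= Rabs (yf u x) * Rabs (yf u x) + 1/4).
    { replace ((Rabs (yf u x) - 1/2) * (Rabs (yf u x) - 1/2)) with
        (Rabs (yf u x) * Rabs (yf u x) + 1/4 - Rabs (yf u x)) in H1 by field. lra. }
    rewrite HY. lra. }
  assert (HY0 : 0 <= Y) by (rewrite HY; pose proof (exp_pos 20); lra).
  set (b := c * X ^ (S (S k1)) / (INR (S k1) * INR (S (S k1)))).
  assert (Hkk : 0 < INR (S k1) * INR (S (S k1))) by (apply Rmult_lt_0_compat; apply lt_0_INR; lia).
  assert (HSk : INR (S (S k1)) = INR k + 1) by (rewrite S_INR; reflexivity).
  assert (Hb9 : b * (INR k * (INR k + 1)) <= 9).
  { assert (b * (INR k * (INR k + 1)) = c * X ^ (S (S k1))).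
    { unfold b. rewrite HSk. change (INR (S k1)) with (INR k). field. lra. }
    rewrite H. apply Rle_trans with (1 * X ^ (S (S k1))); [|lra]. apply Rmult_le_compat_r. apply pow_le; lra. lra. }
  assert (Hb0 : 0 <= b).
  { unfold b. apply Rmult_le_pos. apply Rmult_le_pos. lra. apply pow_le; lra. apply Rlt_le, Rinv_0_lt_compat; auto. }
  assert (Heb : (Y + 1) * b < / INR (S k)).
  { rewrite S_INR. assert (0 < INR k * (INR k + 1)) by nra.
    assert ((Y + 1) * b * (INR k * (INR k + 1)) < INR k).
    { apply Rle_lt_trans with ((Y + 1) * 9). rewrite Rmult_assoc. apply Rmult_le_compat_l; lra. lra. }
    apply Rmult_lt_reg_r with (INR k + 1). lra. rewrite Rinv_l by lra. nra. }
  assert (HSk' : / INR (S k) <= / 4).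
  { apply Rinv_le_contravar. lra. rewrite S_INR. lra. }
  assert (Hb1 : b <= 1) by nra.
  assert (PB := picard c k1 u u' (vc c k1) X Y Hu Hu' Hu0 Hu'0 (vc0 c k1) (vc1 c k1) (vrec c k1)
                  ltac:(lra) ltac:(lra) HY0 Hb1 Hy).
  fold b in PB.
  assert (Hy2 : forall x, 0 <= x <= X -> Rabs (yf u x - (x - 1)) <= (Y + 1) * b).
  { intros x Hx. specialize (PB 0%nat 2%nat ltac:(lia) x Hx). unfold ef in PB.
    assert (E : Pp (vc c k1) 2 x = x - 1) by (unfold Pp; cbn [sm]; rewrite vc0, vc1; ring).
    rewrite E in PB. simpl pow in PB. rewrite Rmult_1_r in PB. exact PB. }
  assert (HyX : 0 < yf u X).
  { specialize (Hy2 X ltac:(lra)). apply Rabs_le_between in Hy2.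
    assert (/ INR (S k) < / INR k) by (apply Rinv_lt_contravar; [apply Rmult_lt_0_compat; [lra| apply lt_0_INR; lia] | rewrite S_INR; lra]).
    unfold X in *. lra. }
  assert (Hyneg : forall x, 0 < x <= 1/2 -> yf u x < 0).
  { intros x Hx. specialize (Hy2 x ltac:(unfold X; lra)). apply Rabs_le_between in Hy2. lra. }
  assert (Hy0 : yf u 0 = -1) by (unfold yf; rewrite Hu0; replace (-1 * 0) with 0 by ring; rewrite exp_0; ring).
  assert (Hcont : continuity (yf u)).
  { intros x. apply continuity_pt_filterlim. apply (ex_derive_continuous (yf u)).
    exists (zf u u' x). apply (y_der c k1 u u' Hu). }
  destruct (IVT (yf u) 0 X Hcont ltac:(lra) ltac:(lra) HyX) as [z0 [Hz0 Hyz0]].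
  assert (Hyu : forall x, yf u x = 0 -> u x = 0).
  { intros x Hx. unfold yf in Hx. apply Rmult_integral in Hx. destruct Hx as [Hx|Hx]; auto.
    pose proof (exp_pos (-1 * x)). lra. }
  assert (Hrho_le : rho <= X).
  { destruct (Rle_lt_dec rho z0) as [|Hlt]. lra. exfalso.
    assert (z0 <> 0) by (intros ->; lra).
    apply (Hmin z0). lra. apply Hyu. auto. }
  assert (Hyr : yf u rho = 0) by (unfold yf; rewrite Hur; ring).
  assert (Hrho_half : 1/2 < rho).
  { destruct (Rlt_le_dec (1/2) rho); auto. exfalso. specialize (Hyneg rho ltac:(lra)). lra. }
  set (q := qs rho (vc c k1)).
  assert (Hqrel : forall m, q m * rho ^ (S m) = - Pp (vc c k1) (S m) rho).
  { intros m. induction m.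
    - unfold q, Pp. simpl. rewrite vc0. field. lra.
    - rewrite Pp_S. assert (E : Pp (vc c k1) (S m) rho = - (q m * rho ^ (S m))) by lra. rewrite E.
      assert (E2 : q (S m) = (q m - vc c k1 (S m)) / rho) by reflexivity. rewrite E2.
      change (rho ^ S (S m)) with (rho * rho ^ (S m)). change (rho ^ S m) with (rho * rho ^ m). field. lra. }
  set (p := S (S k1)).
  assert (Hq : forall i m, (1 + i * p <= m)%nat -> Rabs (q m) * rho ^ (S m) <= (Y + 1) * b ^ (S i)).
  { intros i m Hm. replace (Rabs (q m) * rho ^ S m) with (Rabs (q m * rho ^ S m)).
    2:{ rewrite Rabs_mult. rewrite (Rabs_pos_eq (rho ^ S m)); auto. apply pow_le; lra. }
    rewrite Hqrel. replace (- Pp (vc c k1) (S m) rho) with (ef u (vc c k1) (S m) rho)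
      by (unfold ef; rewrite Hyr; ring).
    apply PB. unfold p in Hm. lia. lra. }
  set (kap := Rpower (INR k) ((1 - eta0) / INR k)).
  assert (Hk0 : 0 < INR k) by lra.
  assert (Hkap1 : 1 <= kap).
  { unfold kap. apply Rpower_ge1. lra. apply Rmult_le_pos. lra. lra. }
  assert (Hkap3 : kap <= 3).
  { unfold kap, Rpower. apply Rle_trans with (exp 1); [|apply exp_le_3]. apply exp_le.
    pose proof (ln_le_xm1 (INR k) Hk0). assert (0 <= ln (INR k)) by (pose proof (ln_ge1 (INR k) Hk3); lra).
    assert ((1 - eta0) / INR k <= 1 * / INR k) by (unfold Rdiv; apply Rmult_le_compat_r; lra).
    rewrite Rmult_1_l in H1.
    assert (/ INR k * ln (INR k) <= 1).
    { apply Rmult_le_reg_l with (INR k). lra. rewrite <- Rmult_assoc, Rinv_r by lra. lra. }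
    assert ((1 - eta0) / INR k * ln (INR k) <= / INR k * ln (INR k)) by (apply Rmult_le_compat_r; lra).
    lra. }
  assert (Hkapk : kap ^ k = Rpower (INR k) (1 - eta0)).
  { rewrite <- Rpower_pow by lra. unfold kap. rewrite Rpower_mult. f_equal. field. lra. }
  assert (HAB : Rpower (INR k) (1 - eta0) * Rpower (INR k) eta0 = INR k).
  { rewrite <- Rpower_plus. replace (1 - eta0 + eta0) with 1 by ring. apply Rpower_1. lra. }
  assert (HApos : 0 < Rpower (INR k) eta0) by (unfold Rpower; apply exp_pos).
  assert (Hcond : 4 * INR p * (Y + 1) * (b * kap ^ p) <= 1).
  { assert (Hkp : kap ^ p = kap ^ k * kap) by (unfold p, k; simpl; ring).
    rewrite Hkp, Hkapk. unfold p. rewrite HSk.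
    set (B := Rpower (INR k) (1 - eta0)) in *. set (A := Rpower (INR k) eta0) in *.
    assert (0 <= B) by (unfold B, Rpower; left; apply exp_pos).
    assert (b * (INR k + 1) <= 9 / INR k).
    { apply Rmult_le_reg_r with (INR k). lra. unfold Rdiv. replace (9 * / INR k * INR k) with 9 by (field; lra).
      replace (b * (INR k + 1) * INR k) with (b * (INR k * (INR k + 1))) by ring. lra. }
    assert (b * (B * kap) * (INR k + 1) <= 9 / INR k * (B * 3)).
    { replace (b * (B * kap) * (INR k + 1)) with ((b * (INR k + 1)) * (B * kap)) by ring.
      apply Rmult_le_compat. nra. apply Rmult_le_pos; lra. auto. apply Rmult_le_compat_l; lra. }
    assert (9 / INR k * (B * 3) = 27 / A).
    { apply Rmult_eq_reg_r with (INR k * A). 2: nra.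
      replace (9 / INR k * (B * 3) * (INR k * A)) with (27 * (B * A)) by (field; lra). rewrite HAB. field. lra. }
    assert (27 / A * (4 * (Y + 1)) <= 1).
    { apply Rmult_le_reg_r with A; auto. replace (27 / A * (4 * (Y + 1)) * A) with (108 * (Y + 1)) by (field; lra). lra. }
    replace (4 * (INR k + 1) * (Y + 1) * (b * (B * kap))) with ((b * (B * kap) * (INR k + 1)) * (4 * (Y + 1))) by ring.
    apply Rle_trans with (27 / A * (4 * (Y + 1))); auto. apply Rmult_le_compat_r. lra. lra. }
  destruct (qconds q p rho kap Y b ltac:(unfold p; lia) Hrho_half Hkap1 HY0 Hb0 Hcond Hq) as [HA HB].
  assert (HFv := FV c k1 (Fs s) (vc c k1) (ric s c k1 Hs0 Hric) ltac:(unfold Fs; simpl; rewrite Hs0; ring)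
                    (vc0 c k1) (vc1 c k1) (vrec c k1)).
  assert (Hhq := hq_id rho (Fs s) (vc c k1) ltac:(lra) (vc0 c k1) HFv).
  fold q in Hhq.
  assert (Hq0 : q O = / rho) by reflexivity.
  assert (HR : 0 < rho * kap) by (apply Rmult_lt_0_compat; lra).
  assert (Hh := hbound (fun i => Fs s i - (/ rho) ^ (S i)) q (rho * kap) HR
                 ltac:(rewrite Hq0; apply Rinv_0_lt_compat; lra) Hhq
                 ltac:(rewrite Hq0; exact HA) ltac:(rewrite Hq0; exact HB) n).
  cbv beta in Hh.
  exists ((Fs s n - (/ rho) ^ (S n)) * rho ^ (S n)).
  assert (Hn0 : n <> O) by (unfold k in Hkn; lia).
  assert (Hsn : s n = Fs s n) by (unfold Fs; destruct n; [lia|simpl; ring]).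
  split.
  - rewrite Hsn. rewrite pow_inv. field. apply pow_nonzero. lra.
  - set (h := Fs s n - (/ rho) ^ (S n)) in *.
    assert (Hkn' : 0 < kap ^ n) by (apply pow_lt; lra).
    assert (Habs : Rabs (h * rho ^ S n) = Rabs h * (rho * kap) ^ n * rho / kap ^ n).
    { rewrite Rabs_mult, (Rabs_pos_eq (rho ^ S n)) by (apply pow_le; lra).
      rewrite Rpow_mult_distr. simpl. field. lra. }
    rewrite Habs.
    assert (Hnk : INR k <= INR n) by (apply le_INR; auto).
    assert (Hpw : Rpower (INR n) (1 - eta0) <= kap ^ n).
    { rewrite <- Rpower_pow by lra. unfold kap. rewrite Rpower_mult. unfold Rpower. apply exp_le.
      pose proof (key_ineq (INR n) (INR k) Hk3 Hnk).
      replace ((1 - eta0) / INR k * INR n * ln (INR k)) with ((1 - eta0) * (INR n / INR k * ln (INR k))) by (field; lra).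
      apply Rmult_le_compat_l; lra. }
    assert (Hpp : 0 < Rpower (INR n) (1 - eta0)) by (unfold Rpower; apply exp_pos).
    assert (0 <= Rabs h * (rho * kap) ^ n) by (apply Rmult_le_pos; [apply Rabs_pos | apply pow_le; lra]).
    assert (Rabs h * (rho * kap) ^ n * rho <= 2).
    { assert (rho <= 2) by (unfold X in Hrho_le; lra). nra. }
    unfold Rdiv. apply Rle_trans with (2 * / kap ^ n).
    { apply Rmult_le_compat_r. apply Rlt_le, Rinv_0_lt_compat; auto. auto. }
    apply Rmult_le_compat_l. lra. apply Rinv_le_contravar; auto.
Qed.

Theorem lemma3p5 :
  forall eta : R, 0 < eta ->
  exists (D : nat) (K : R) (N : nat),
    (0 < D)%nat /\
    forall (n : nat) (t : ptree), (N <= n)%nat ->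
      (D <= psize t)%nat -> (psize t <= n)%nat ->
      forall (s : nat -> R) (u : R -> R) (rho : R),
        is_S_coeffs t s -> is_u t u -> smallest_pos_zero u rho ->
        exists E : R,
          s n / T_coef n = / rho ^ (S n) * (1 + E) /\
          Rabs E <= K * ln (INR n) / Rpower (INR n) (1 - eta).
Proof.
  intros eta Heta.
  set (eta0 := Rmin eta (1/2)).
  assert (He0 : 0 < eta0 <= 1/2) by (unfold eta0; split; [apply Rmin_glb_lt; lra | apply Rmin_r]).
  assert (He0' : eta0 <= eta) by apply Rmin_l.
  set (Y := 1 + 2 * exp 20).
  assert (HY : 0 <= Y) by (unfold Y; pose proof (exp_pos 20); lra).
  set (Q := Rpower (108 * (Y + 1)) (/ eta0)).
  destruct (INR_unbounded (Rmax 3 (Rmax (9 * (Y + 1)) Q))) as [D HD].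
  pose proof (Rmax_l 3 (Rmax (9 * (Y + 1)) Q)). pose proof (Rmax_r 3 (Rmax (9 * (Y + 1)) Q)).
  pose proof (Rmax_l (9 * (Y + 1)) Q). pose proof (Rmax_r (9 * (Y + 1)) Q).
  exists D, 2, D. split.
  { destruct D. simpl in HD. lra. lia. }
  intros n t HNn HDt Htn s u rho HS Hu Hrho.
  set (k1 := (psize t - 1)%nat).
  assert (Hps : S k1 = psize t) by (unfold k1; destruct D; [simpl in HD; lra | lia]).
  assert (HDk : INR D <= INR (S k1)) by (apply le_INR; lia).
  destruct (c_bounds t ltac:(lia)) as [Hc0 Hc1].
  set (c := wt t * INR (psize t)) in *.
  destruct HS as [Hs0 Hric].
  destruct Hu as [u' [Hd [Hd' [Hu0 Hu'0]]]].
  destruct Hrho as [Hr0 [Hur Hmin]].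
  assert (HkA : 108 * (Y + 1) <= Rpower (INR (S k1)) eta0).
  { assert (HQ : 0 < Q) by (unfold Q, Rpower; apply exp_pos).
    replace (108 * (Y + 1)) with (Rpower Q eta0).
    apply Rle_Rpower_l. lra. lra.
    unfold Q. rewrite Rpower_mult. replace (/ eta0 * eta0) with 1 by (field; lra). apply Rpower_1. lra. }
  destruct (core eta0 Y c k1 n s u u' rho He0 eq_refl ltac:(lra) ltac:(lra) HkA ltac:(lia) (conj Hc0 Hc1)
              Hs0 Hric Hd Hd' Hu0 Hu'0 Hr0 Hur Hmin) as [E [HE1 HE2]].
  exists E. split.
  - destruct n. lia. unfold T_coef. rewrite HE1. field. apply pow_nonzero. lra.
  - assert (Hn3 : 3 <= INR n) by (apply Rle_trans with (INR (S k1)); [lra | apply le_INR; lia]).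
    assert (Hln : 1 <= ln (INR n)) by (apply ln_ge1; auto).
    assert (HP0 : 0 < Rpower (INR n) (1 - eta)) by (unfold Rpower; apply exp_pos).
    assert (HP : Rpower (INR n) (1 - eta) <= Rpower (INR n) (1 - eta0)) by (apply Rle_Rpower; lra).
    apply Rle_trans with (2 / Rpower (INR n) (1 - eta0)); auto.
    unfold Rdiv. apply Rle_trans with (2 * / Rpower (INR n) (1 - eta)).
    + apply Rmult_le_compat_l. lra. apply Rinv_le_contravar; auto.
    + assert (0 < / Rpower (INR n) (1 - eta)) by (apply Rinv_0_lt_compat; auto). nra.
Qed.
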